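(* Let $G$ be a finite bipartite graph and let $e_1=\{b_1,w_1\},\dots,e_n=\{b_n,w_n\}$ be pairwise vertex-disjoint edges, with $b_i$ black and $w_i$ white. Let $G^e=G-\{e_1,\dots,e_n\}$ (edges deleted) and $G'=G-\{b_1,w_1,\dots,b_n,w_n\}$ (vertices deleted). Suppose that for every $i$ there is a nonempty channel $B_i\in\mathcal{C}_B(G^e)$ with $B_i\cap\{b_1,\dots,b_n\}\subseteq\{b_i\}$. Then $m_G\equiv m_{G'}\pmod 2$. If moreover $B_i\cap\{b_1,\dots,b_n\}=\{b_i\}$ for all $i$, then $|\mathcal{C}_B(G)|=|\mathcal{C}_B(G')|$.
   Context: $m_H$ is the number of perfect matchings of $H$. A channel of a graph $H$ is a vertex set $C$ such that every vertex of $H$ is adjacent to an even number of vertices of $C$ (empty set included). For bipartite $H$ with black/white coloring, $\mathcal{C}_B(H)$ is the set of channels consisting only of black vertices. *)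

(* Defs.v *)
(* A graph is given by a vertex set V : {set T} over a
   finite type T together with an adjacency relation adj : rel T
   (only adjacency between vertices of V matters). *)
From mathcomp Require Import all_boot.
Set Implicit Arguments. Unset Strict Implicit. Unset Printing Implicit Defensive.

Section Graphs.
Variable T : finType.

Definition is_perfect_matching (V : {set T}) (adj : rel T)
    (M : {set {set T}}) : bool :=
  [forall E in M, exists x, exists y,
      [&& E == [set x; y], x != y, adj x y, x \in V & y \in V]]
  && [forall v in V, #|[set E in M | v \in E]| == 1].

Definition num_pm (V : {set T}) (adj : rel T) : nat :=
  #|[set M : {set {set T}} | is_perfect_matching V adj M]|.

Definition is_channel (V : {set T}) (adj : rel T) (C : {set T}) : bool :=
  (C \subset V) && [forall v in V, ~~ odd #|[set u in C | adj v u]|].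

(* C_B(H): channels consisting only of black vertices (col x = true). *)
Definition black_channels (V : {set T}) (adj : rel T) (col : T -> bool)
    : {set {set T}} :=
  [set C : {set T} | is_channel V adj C && [forall x in C, col x]].

End Graphs.

(* Main.v *)
Require Import Defs.
From mathcomp Require Import all_boot.
Set Implicit Arguments. Unset Strict Implicit. Unset Printing Implicit Defensive.

Lemma pm_edge (T : finType) (V : {set T}) (adj : rel T) (M : {set {set T}}) E :
  is_perfect_matching V adj M -> E \in M ->
  exists x y, [/\ E = [set x; y], x != y, adj x y, x \in V & y \in V].
Proof.
case/andP=> /forallP H _ EM; move: (H E); rewrite EM /= => /existsP[x /existsP[y]].
by case/and5P=> /eqP-> *; exists x, y.
Qed.

Lemma pm_cover (T : finType) (V : {set T}) (adj : rel T) (M : {set {set T}}) v :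
  is_perfect_matching V adj M -> v \in V -> #|[set E in M | v \in E]| = 1.
Proof. by case/andP=> _ /forallP H vV; move: (H v); rewrite vV => /eqP. Qed.

Lemma pm_intro (T : finType) (V : {set T}) (adj : rel T) (M : {set {set T}}) :
  (forall E, E \in M -> exists x y, [/\ E = [set x; y], x != y, adj x y, x \in V & y \in V]) ->
  (forall v, v \in V -> #|[set E in M | v \in E]| = 1) ->
  is_perfect_matching V adj M.
Proof.
move=> H1 H2; apply/andP; split; apply/forallP => E; apply/implyP.
  move=> /H1 [x [y [-> ? ? ? ?]]]; apply/existsP; exists x; apply/existsP; exists y.
  by apply/and5P; split.
by move=> /H2 ->.
Qed.

Lemma pm_sub (T : finType) (V : {set T}) (adj : rel T) (M : {set {set T}}) E :
  is_perfect_matching V adj M -> E \in M -> E \subset V.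
Proof.
move=> pm EM; have [x [y [-> _ _ xV yV]]] := pm_edge pm EM.
by apply/subsetP=> z; rewrite !inE => /orP[] /eqP->.
Qed.

Lemma pm_uniq (T : finType) (V : {set T}) (adj : rel T) (M : {set {set T}}) v E1 E2 :
  is_perfect_matching V adj M -> E1 \in M -> E2 \in M -> v \in E1 -> v \in E2 -> E1 = E2.
Proof.
move=> pm E1M E2M v1 v2.
have vV : v \in V by apply: (subsetP (pm_sub pm E1M)).
have /eqP/cards1P[E0 HE0] := pm_cover pm vV.
have : E1 \in [set E in M | v \in E] by rewrite inE E1M.
have : E2 \in [set E in M | v \in E] by rewrite inE E2M.
by rewrite HE0 !inE => /eqP-> /eqP->.
Qed.

Lemma pm_ext (T : finType) (V : {set T}) (adj1 adj2 : rel T) :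
  {in V &, adj1 =2 adj2} -> num_pm V adj1 = num_pm V adj2.
Proof.
move=> H; apply: eq_card => M; rewrite !inE /is_perfect_matching; congr andb.
apply: eq_forallb => E; congr (_ ==> _); apply: eq_existsb => x; apply: eq_existsb => y.
case xV: (x \in V); case yV: (y \in V); rewrite ?andbF //.
by rewrite H.
Qed.


Lemma pm_add (T : finType) (V : {set T}) (adj : rel T) x y (N : {set {set T}}) :
  adj x y -> x != y -> x \in V -> y \in V ->
  is_perfect_matching (V :\: [set x; y]) adj N ->
  is_perfect_matching V adj ([set x; y] |: N).
Proof.
move=> axy nxy xV yV pm; apply: pm_intro.
  move=> E; rewrite !inE => /orP[/eqP->|EN]; first by exists x, y.
  have [a [c [-> ? ? aV cV]]] := pm_edge pm EN.
  by exists a, c; move: aV cV; rewrite !inE => /andP[_ ->] /andP[_ ->].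
move=> v vV; case vE: (v \in [set x; y]).
  apply/eqP/cards1P; exists [set x; y]; apply/setP => E; rewrite !inE.
  apply/idP/idP.
    case/andP=> /orP[//|EN] vE'.
    have := subsetP (pm_sub pm EN) v vE'; by rewrite inE vE.
  by move/eqP->; rewrite eqxx vE.
have vV' : v \in V :\: [set x; y] by rewrite inE vE.
rewrite -(pm_cover pm vV'); apply: eq_card => E; rewrite [in LHS]in_set [in RHS]in_set in_setU1.
case: (E =P [set x; y]) => [->|_] //=.
by rewrite vE andbF.
Qed.

Lemma pm_remove (T : finType) (V : {set T}) (adj : rel T) x y (M : {set {set T}}) :
  is_perfect_matching V adj M -> [set x; y] \in M ->
  is_perfect_matching (V :\: [set x; y]) adj (M :\ [set x; y]).
Proof.
move=> pm EM; apply: pm_intro.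
  move=> E; rewrite !inE => /andP[nE EM'].
  have [a [c [defE ? ? aV cV]]] := pm_edge pm EM'.
  have notin : forall z, z \in E -> z \notin [set x; y].
    move=> z zE; apply/negP=> zxy; move/eqP: nE; apply.
    exact: (pm_uniq pm EM' EM zE zxy).
  exists a, c; split=> //; rewrite inE ?aV ?cV andbT; apply: notin; rewrite defE !inE eqxx ?orbT //.
move=> v; rewrite inE => /andP[vE vV]; rewrite -(pm_cover pm vV).
apply: eq_card => E; rewrite !inE; case: (E =P [set x; y]) => [->|] //=.
by rewrite (negbTE vE) andbF.
Qed.

Lemma pm_partner (T : finType) (V : {set T}) (adj : rel T) x (M : {set {set T}}) :
  symmetric adj -> is_perfect_matching V adj M -> x \in V ->
  \sum_(y in V | adj x y && (y != x)) ([set x; y] \in M : nat) = 1.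
Proof.
move=> sym pm xV.
have /eqP/cards1P[E0 HE0] := pm_cover pm xV.
have : E0 \in [set E in M | x \in E] by rewrite HE0 inE.
rewrite inE => /andP[E0M xE0].
have [y [E0y yV axy nyx]] : exists y, [/\ E0 = [set x; y], y \in V, adj x y & y != x].
  have [a [c [defE nac aac aV cV]]] := pm_edge pm E0M.
  move: xE0; rewrite defE !inE => /orP[]/eqP->.
    by exists c; split=> //; rewrite eq_sym.
  by exists a; split=> //; [rewrite setUC | rewrite sym].
rewrite (bigD1 y) /=; last by rewrite yV axy nyx.
rewrite -E0y E0M big1 //= => z /andP[/andP[zV /andP[axz nzx]] nzy].
apply/eqP; rewrite eqb0; apply/negP=> zM.
have := pm_uniq pm zM E0M (setU11 x [set z]) xE0.
move=> H; have : z \in [set x; z] by rewrite !inE eqxx orbT.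
by rewrite H E0y !inE (negbTE nzx) (negbTE nzy).
Qed.

Lemma sum_ind_card (I : finType) (A : {pred I}) (P : pred I) :
  \sum_(i in A) (P i : nat) = #|[set i in A | P i]|.
Proof.
rewrite -sum1_card [RHS]big_mkcond [LHS]big_mkcond /=; apply: eq_bigr => i _.
by rewrite inE; case: (i \in A); case: (P i).
Qed.

Lemma pm_expand (T : finType) (V : {set T}) (adj : rel T) x :
  symmetric adj -> x \in V ->
  num_pm V adj = \sum_(y in V | adj x y && (y != x)) num_pm (V :\: [set x; y]) adj.
Proof.
move=> sym xV; rewrite /num_pm -sum1_card.
transitivity (\sum_(M in [set M | is_perfect_matching V adj M])
                \sum_(y in V | adj x y && (y != x)) ([set x; y] \in M : nat)).
  by apply: eq_bigr => M; rewrite inE => pm; rewrite pm_partner.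
rewrite exchange_big /=; apply: eq_bigr => y /andP[yV /andP[axy nyx]].
rewrite sum_ind_card.
have inj : {in [set N | is_perfect_matching (V :\: [set x; y]) adj N] &,
             injective (fun N => [set x; y] |: N)}.
  have nE : forall N, N \in [set N | is_perfect_matching (V :\: [set x; y]) adj N] ->
     [set x; y] \notin N.
    move=> N; rewrite inE => pm; apply/negP=> EN.
    have := subsetP (pm_sub pm EN) x (setU11 _ _); by rewrite !inE eqxx.
  move=> N1 N2 H1 H2 /= e.
  by rewrite -(setU1K (nE _ H1)) -(setU1K (nE _ H2)) e.
rewrite -(card_in_imset inj); apply: eq_card => M; apply/idP/idP.
  rewrite !inE => /andP[pm EM]; apply/imsetP; exists (M :\ [set x; y]).
    by rewrite inE; apply: pm_remove.
  by rewrite setD1K.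
case/imsetP=> N; rewrite !inE => pm ->; rewrite setU11 andbT.
by apply: pm_add => //; rewrite eq_sym.
Qed.
Lemma sum_pairs_even (I : finType) (P : {pred I}) (f : I -> I -> nat) :
  (forall y z, f y z = f z y) ->
  ~~ odd (\sum_(y in P) \sum_(z in P | z != y) f y z).
Proof.
move=> fsym; pose r := fun i : I => nat_of_ord (enum_rank i).
have req : forall y z, (z == y) = (r z == r y).
  by move=> y z; rewrite /r val_eqE (inj_eq enum_rank_inj).
have spl : forall y, \sum_(z in P | z != y) f y z =
   \sum_(z in P | r z < r y) f y z + \sum_(z in P | r y < r z) f y z.
  move=> y; rewrite (bigID (fun z => r z < r y)) /=; congr (_ + _); apply: eq_bigl => z;
  rewrite req; case: (z \in P) => //=; by case: ltngtP.
rewrite (eq_bigr _ (fun y _ => spl y)) big_split /=.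
have -> : \sum_(y in P) \sum_(z in P | r y < r z) f y z =
          \sum_(y in P) \sum_(z in P | r z < r y) f y z.
  rewrite (exchange_big_dep P) /=; last by move=> i j _ /andP[].
  apply: eq_big => [//|y yP]; apply: eq_big => [z|z _]; [|exact: fsym].
    by have ->: (y \in P) = true by exact: yP.
have E : forall a b : nat, a = b -> ~~ odd (a + b) by move=> a b ->; rewrite addnn odd_double.
by apply: E.
Qed.

Lemma even_sum (I : finType) (P : pred I) (F : I -> nat) :
  (forall i, P i -> ~~ odd (F i)) -> ~~ odd (\sum_(i | P i) F i).
Proof.
move=> H; apply: (big_ind (fun x => ~~ odd x)) => // x y hx hy.
by rewrite oddD (negbTE hx) (negbTE hy).
Qed.

Lemma channel_even (T : finType) (V : {set T}) (adj : rel T) (B : {set T}) :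
  symmetric adj -> irreflexive adj -> B \subset V -> B != set0 ->
  (forall v, v \in V -> ~~ odd #|[set u in B | adj v u]|) ->
  ~~ odd (num_pm V adj).
Proof.
move=> sym irr BV /set0Pn[b0 b0B] ch.
have b0V := subsetP BV _ b0B.
pose g y := num_pm (V :\: [set b0; y]) adj.
pose Tb bb := \sum_(y in V | adj bb y && (y != b0)) g y.
have Hm : num_pm V adj = Tb b0 := pm_expand sym b0V.
have HS : ~~ odd (\sum_(bb in B) Tb bb).
  rewrite /Tb (exchange_big_dep (fun y => (y \in V) && (y != b0))) /=;
    last by move=> i j _ /andP[-> /andP[_ ->]].
  apply: even_sum => y /andP[yV nyb].
  rewrite (eq_bigl (fun i => i \in [set u in B | adj y u])).
    by rewrite sum_nat_const oddM (negbTE (ch y yV)).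
  by move=> i; rewrite !inE yV nyb sym !andbT.
rewrite (bigD1 b0) //= -Hm oddD in HS.
have HT : ~~ odd (\sum_(bb in B | bb != b0) Tb bb).
  apply: even_sum => bb /andP[bbB nbb].
  have bbV := subsetP BV _ bbB.
  rewrite /Tb (eq_bigr (fun y => \sum_(z in [set y in V | adj bb y && (y != b0)] | z != y)
                 num_pm (V :\: [set b0; y] :\: [set bb; z]) adj)).
    rewrite (eq_bigl (fun y => y \in [set y in V | adj bb y && (y != b0)]));
      last by move=> y; rewrite inE.
    apply: (@sum_pairs_even T [set y in V | adj bb y && (y != b0)]
      (fun y z => num_pm (V :\: [set b0; y] :\: [set bb; z]) adj)) => y z /=.
    have -> : V :\: [set b0; y] :\: [set bb; z] = V :\: [set b0; z] :\: [set bb; y]; last by [].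
    apply/setP => t; rewrite !inE.
    by case: (t == y); case: (t == z); case: (t == bb); case: (t == b0).
  move=> y /andP[yV /andP[aby nyb0]]; rewrite /g (pm_expand (x := bb) sym).
    apply: eq_bigl => z; rewrite !inE.
    case abz: (adj bb z); first last.
      by case: (z \in V); case: (z == y); case: (z == b0).
    have -> : (z != bb) by apply/negP=> /eqP e; move: abz; rewrite e irr.
    by case: (z == y); case: (z == b0); case: (z \in V).
  rewrite !inE bbV andbT (negbTE nbb) /=; apply/negP=> /eqP e; move: aby; rewrite e irr.
  done.
by rewrite (negbTE HT) addbF in HS.
Qed.

Lemma pm_delete_edge (T : finType) (V : {set T}) (adj : rel T) bb ww :
  symmetric adj -> irreflexive adj -> adj bb ww -> bb \in V -> ww \in V ->
  num_pm V adj =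
  num_pm V (fun x y => adj x y && ~~ (((x == bb) && (y == ww)) || ((x == ww) && (y == bb))))
  + num_pm (V :\: [set bb; ww]) adj.
Proof.
move=> sym irr abw bV wV.
set adj' := fun x y => _.
have sym' : symmetric adj'.
  by move=> x y; rewrite /adj' sym; case: (x == bb); case: (y == ww); case: (x == ww); case: (y == bb).
have nwb : ww != bb by apply/negP=> /eqP e; move: abw; rewrite e irr.
rewrite (pm_expand sym bV) (pm_expand sym' bV) (bigD1 ww) /=; last by rewrite wV abw nwb.
rewrite addnC; congr (_ + _); apply: eq_big => [y|y /andP[/andP[yV /andP[_ nyb]] _]].
  rewrite /adj' eqxx /= (eq_sym bb ww) (negbTE nwb) /= orbF.
  by case: (y \in V); case: (adj bb y); case: (y == bb); case: (y == ww).
apply: pm_ext => x z; rewrite !inE /adj' => /andP[/norP[xb _] _] /andP[/norP[zb _] _].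
by rewrite (negbTE xb) (negbTE zb) /= andbF andbT.
Qed.


Lemma card_sumb (I : finType) (f : pred I) : #|[set i | f i]| = \sum_i (f i : nat).
Proof.
rewrite -sum1_card big_mkcond /=; apply: eq_bigr => i _.
by rewrite inE; case: (f i).
Qed.

Lemma odd_sum_eq (I : finType) (F G : I -> nat) :
  (forall i, odd (F i) = odd (G i)) -> odd (\sum_i F i) = odd (\sum_i G i).
Proof.
move=> H; apply: (big_ind2 (fun x y => odd x = odd y)) => // x1 x2 y1 y2 h1 h2.
by rewrite !oddD h1 h2.
Qed.

Lemma card_xor (I : finType) (p q : pred I) :
  odd #|[set i | p i (+) q i]| = odd #|[set i | p i]| (+) odd #|[set i | q i]|.
Proof.
rewrite !card_sumb -oddD -big_split; apply: odd_sum_eq => i /=.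
by case: (p i); case: (q i).
Qed.

Lemma card_family (I J : finType) (S : pred J) (F : J -> I -> bool) :
  odd #|[set u | odd #|[set i | S i && F i u]|]| =
  odd #|[set i | S i && odd #|[set u | F i u]|]|.
Proof.
rewrite !card_sumb.
transitivity (odd (\sum_u \sum_i (S i && F i u : nat))).
  apply: odd_sum_eq => u; rewrite card_sumb; set s := \sum_i _; by case: (odd s).
rewrite exchange_big; apply: odd_sum_eq => i /=.
rewrite card_sumb; case: (S i) => /=; last by rewrite big1.
set s := \sum_i _; by case: (odd s).
Qed.

Lemma par_sd (T : finType) (adj : rel T) (X Y : {set T}) v :
  odd #|[set u in [set x | (x \in X) (+) (x \in Y)] | adj v u]| =
  odd #|[set u in X | adj v u]| (+) odd #|[set u in Y | adj v u]|.
Proof.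
rewrite -card_xor; congr odd; apply: eq_card => u; rewrite !inE.
by case: (u \in X); case: (u \in Y); case: (adj v u).
Qed.

Lemma par_D (T I : finType) (adj : rel T) (B : I -> {set T}) (S : {set I}) v :
  odd #|[set u in [set x | odd #|[set i in S | x \in B i]|] | adj v u]| =
  odd #|[set i in S | odd #|[set u in B i | adj v u]|]|.
Proof.
transitivity (odd #|[set u | odd #|[set i | (i \in S) && ((u \in B i) && adj v u)]|]|).
  congr odd; apply: eq_card => u; rewrite !inE; case: (adj v u).
    by rewrite andbT; congr odd; apply: eq_card => i; rewrite !inE andbT.
  rewrite andbF; have -> : [set i | (i \in S) && ((u \in B i) && false)] = set0.
    by apply/setP=> i; rewrite !inE !andbF.
  by rewrite cards0.
rewrite (card_family (fun i => i \in S) (fun i u => (u \in B i) && adj v u)).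
by congr odd; apply: eq_card => i; rewrite !inE.
Qed.

Theorem theorem5p7 (T : finType) (adj : rel T) (col : T -> bool)
  (adj_sym : symmetric adj)
  (adj_bip : forall x y, adj x y -> col x != col y)
  (n : nat) (b w : 'I_n -> T)
  (e_adj : forall i, adj (b i) (w i))
  (b_black : forall i, col (b i)) (w_white : forall i, ~~ col (w i))
  (b_inj : injective b) (w_inj : injective w)
  (B : 'I_n -> {set T}) :
  let adj_e : rel T := fun x y =>
    adj x y && ~~ [exists i, ((x == b i) && (y == w i)) || ((x == w i) && (y == b i))] in
  let V' : {set T} := ~: ([set b i | i in 'I_n] :|: [set w i | i in 'I_n]) in
  (forall i, B i \in black_channels [set: T] adj_e col) ->
  (forall i, B i != set0) ->
  (forall i j, b j \in B i -> j = i) ->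
  odd (num_pm [set: T] adj) = odd (num_pm V' adj) /\
  ((forall i, b i \in B i) ->
     #|black_channels [set: T] adj col| = #|black_channels V' adj col|).
Proof.
move=> adj_e V' HB HBne Hbj.
have irr : irreflexive adj by move=> x; apply/negP => /adj_bip; rewrite eqxx.
have Bblack : forall i x, x \in B i -> col x.
  move=> i x; move: (HB i); rewrite inE => /andP[_ /forallP H]; move: (H x).
  by move=> /implyP.
have Bch : forall i v, ~~ odd #|[set u in B i | adj_e v u]|.
  move=> i v; move: (HB i); rewrite inE => /andP[/andP[_ /forallP H] _]; move: (H v).
  by rewrite inE.
have uw : forall u i, col u -> (u == w i) = false.
  by move=> u i cu; apply/negbTE/negP=> /eqP e; move: cu; rewrite e (negbTE (w_white i)).
split.
  pose Vk k := [set x | ~~ [exists i : 'I_n, (i < k) && ((x == b i) || (x == w i))]].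
  have step : forall k, k <= n -> odd (num_pm setT adj) = odd (num_pm (Vk k) adj).
    elim=> [_|k IH lkn].
      have -> : Vk 0 = setT by apply/setP => x; rewrite !inE; apply/negP => /existsP[i]; rewrite ltn0.
      reflexivity.
    have lt : k < n by [].
    pose i0 := Ordinal lt.
    rewrite IH; last exact: ltnW.
    have VkS : Vk k.+1 = Vk k :\: [set b i0; w i0].
      apply/setP=> x; rewrite !inE -negb_or; congr negb; apply/existsP/orP.
        case=> i /andP[]; rewrite ltnS leq_eqVlt => /orP[/eqP e|lik] H.
          by left; move: H; have -> : i = i0 by apply: val_inj.
        by right; apply/existsP; exists i; rewrite lik.
      case=> [H | /existsP[i /andP[lik H]]]; first by exists i0; rewrite /= ltnSn.
      by exists i; rewrite H andbT ltnS ltnW.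
    have notk : forall i : 'I_n, i < k -> i != i0.
      by move=> i lik; apply/negP=> /eqP e; move: lik; rewrite e /= ltnn.
    have bV : b i0 \in Vk k.
      rewrite inE; apply/negP=> /existsP[i /andP[lik /orP[/eqP e|/eqP e]]].
        by move: (notk i lik); rewrite -(b_inj _ _ e) eqxx.
      by move: (b_black i0); rewrite e (negbTE (w_white i)).
    have wV : w i0 \in Vk k.
      rewrite inE; apply/negP=> /existsP[i /andP[lik /orP[/eqP e|/eqP e]]].
        by move: (w_white i0); rewrite e b_black.
      by move: (notk i lik); rewrite -(w_inj _ _ e) eqxx.
    rewrite (pm_delete_edge adj_sym irr (e_adj i0) bV wV) oddD -VkS.
    set adj' := fun x y => _.
    have sym' : symmetric adj'.
      by move=> x y; rewrite /adj' adj_sym; case: (x == b i0); case: (y == w i0); case: (x == w i0); case: (y == b i0).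
    have irr' : irreflexive adj' by move=> x; rewrite /adj' irr.
    have BV : B i0 \subset Vk k.
      apply/subsetP=> u uB; rewrite inE; apply/negP=> /existsP[i /andP[lik /orP[/eqP e|/eqP e]]].
        by move: (notk i lik); rewrite (Hbj i0 i) ?eqxx // -e.
      by move: (Bblack _ _ uB); rewrite e (negbTE (w_white i)).
    have ch : forall v, v \in Vk k -> ~~ odd #|[set u in B i0 | adj' v u]|.
      move=> v _; have -> : [set u in B i0 | adj' v u] = [set u in B i0 | adj_e v u];
        last exact: Bch.
      apply/setP => u; rewrite !inE; case uB: (u \in B i0) => //=.
      have cu := Bblack _ _ uB.
      rewrite /adj_e /adj'; congr (adj v u && ~~ _); apply/orP/existsP.
        case=> /andP[H1 H2]; first by move: H2; rewrite uw.
        by exists i0; rewrite H1 H2 orbT.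
      case=> i; rewrite uw // andbF /= => /andP[H1 /eqP H2].
      right; have e : i = i0 by apply: (Hbj i0 i); rewrite -H2.
      by rewrite -e H1 H2 eqxx.
    by rewrite (negbTE (channel_even sym' irr' BV (HBne i0) ch)).
  have -> : V' = Vk n.
    apply/setP=> x; rewrite !inE; congr negb; apply/orP/existsP.
      case=> /imsetP[i _ e]; exists i; rewrite ltn_ord e eqxx ?orbT //.
    case=> i /andP[_ /orP[/eqP e|/eqP e]]; [left|right]; apply/imsetP; by exists i.
  exact: step.
move=> Hbb.
pose par (X : {set T}) v := odd #|[set u in X | adj v u]|.
pose sd (X Y : {set T}) := [set x : T | (x \in X) (+) (x \in Y)].
pose D (S : {set 'I_n}) := [set x : T | odd #|[set i in S | x \in B i]|].
have memsd : forall X Y x, (x \in sd X Y) = (x \in X) (+) (x \in Y) by move=> *; rewrite inE.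
have memD : forall S x, (x \in D S) = odd #|[set i in S | x \in B i]| by move=> *; rewrite inE.
have sdK : forall X Y, sd (sd X Y) Y = X.
  by move=> X Y; apply/setP=> x; rewrite !memsd addbK.
have parsd : forall X Y v, par (sd X Y) v = par X v (+) par Y v.
  by move=> X Y v; apply: par_sd.
have parB : forall i v, par (B i) v = (v == w i).
  move=> i v.
  have eq1 : [set u in B i | adj v u] =
     [set u | ((u \in B i) && adj_e v u) (+) ((u \in B i) && ((v == w i) && (u == b i)))].
    apply/setP=> u; rewrite !inE; case uB: (u \in B i) => //=.
    have cu := Bblack _ _ uB.
    have ex : [exists j, ((v == b j) && (u == w j)) || ((v == w j) && (u == b j))] =
              (v == w i) && (u == b i).
      apply/existsP/andP.
        case=> j; rewrite uw // andbF /= => /andP[/eqP H1 /eqP H2].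
        have e : j = i by apply: (Hbj i j); rewrite -H2.
        by rewrite H1 H2 e.
      by case=> H1 H2; exists i; rewrite H1 H2 orbT.
    rewrite /adj_e ex; case: (v =P w i) => [->|] /=; last by rewrite andbT addbF.
    case: (u =P b i) => [->|] /=; last by rewrite andbT addbF.
    by rewrite adj_sym e_adj.
  rewrite /par eq1 card_xor (negbTE (Bch i v)) /=.
  case: (v == w i).
    have -> : [set u | (u \in B i) && (true && (u == b i))] = [set b i].
      by apply/setP=> u; rewrite !inE; case: (u =P b i) => [->|]; rewrite ?Hbb ?andbF.
    by rewrite cards1.
  have -> : [set u | (u \in B i) && (false && (u == b i))] = set0.
    by apply/setP=> u; rewrite !inE andbF.
  by rewrite cards0.
have parW : forall (S : {set 'I_n}) v, odd #|[set i in S | v == w i]| = (v \in [set w i | i in S]).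
  move=> S v; case: (boolP (v \in [set w i | i in S])) => [/imsetP[j jS ->]|H].
    have -> : [set i in S | w j == w i] = [set j].
      apply/setP=> i; rewrite !inE (inj_eq w_inj) eq_sym.
      by case: (i =P j) => [->|]; rewrite ?jS ?andbF.
    by rewrite cards1.
  have -> : [set i in S | v == w i] = set0.
    apply/setP=> i; rewrite !inE; apply/negbTE/negP => /andP[iS /eqP e].
    by move: H; rewrite e imset_f.
  by rewrite cards0.
have parD : forall S v, par (D S) v = (v \in [set w i | i in S]).
  move=> S v; rewrite /par par_D -parW; congr odd; apply: eq_card => i; rewrite !inE.
  case: (i \in S) => //=; exact: parB.
have Dblack : forall S x, x \in D S -> col x.
  move=> S x; rewrite memD => H.
  have : [set i in S | x \in B i] != set0 by apply/negP => /eqP e; rewrite e cards0 in H.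
  by case/set0Pn=> i; rewrite inE => /andP[_ xB]; exact: Bblack xB.
have bB : forall i j, (b j \in B i) = (i == j).
  by move=> i j; apply/idP/eqP => [/Hbj -> //|->]; exact: Hbb.
have Db : forall S j, (b j \in D S) = (j \in S).
  move=> S j; rewrite memD.
  have -> : [set i in S | b j \in B i] = [set i in S | i == j].
    by apply/setP=> i; rewrite !inE bB.
  case: (boolP (j \in S)) => jS.
    have -> : [set i in S | i == j] = [set j].
      by apply/setP=> i; rewrite !inE; case: (i =P j) => [->|]; rewrite ?jS ?andbF.
    by rewrite cards1.
  have -> : [set i in S | i == j] = set0.
    by apply/setP=> i; rewrite !inE; case: (i =P j) => [->|]; rewrite ?(negbTE jS) ?andbF.
  by rewrite cards0.
have parBlk : forall (X : {set T}) v, col v -> (forall x, x \in X -> col x) -> par X v = false.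
  move=> X v cv Xb; rewrite /par.
  have -> : [set u in X | adj v u] = set0.
    apply/setP => u; rewrite !inE; apply/negbTE/negP=> /andP[uX avu].
    by move: (adj_bip _ _ avu); rewrite cv (Xb u uX).
  by rewrite cards0.
have CBT_E : forall C, C \in black_channels [set: T] adj col ->
    (forall v, ~~ par C v) /\ (forall x, x \in C -> col x).
  move=> C; rewrite inE => /andP[/andP[_ /forallP H1] /forallP H2]; split => [v|x xC].
    by move: (H1 v); rewrite in_setT.
  exact: (implyP (H2 x)).
have CBT_I : forall C, (forall v, ~~ par C v) -> (forall x, x \in C -> col x) ->
    C \in black_channels [set: T] adj col.
  move=> C H1 H2; rewrite inE; apply/andP; split; last by apply/forallP=> x; apply/implyP; exact: H2.
  by apply/andP; split; [exact: subsetT | apply/forallP=> v; apply/implyP=> _; exact: H1].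
have CBV_E : forall C, C \in black_channels V' adj col ->
    [/\ C \subset V', (forall v, v \in V' -> ~~ par C v) & (forall x, x \in C -> col x)].
  move=> C; rewrite inE => /andP[/andP[sub /forallP H1] /forallP H2]; split => // [v vV|x xC].
    by move: (H1 v); rewrite vV.
  exact: (implyP (H2 x)).
have CBV_I : forall C : {set T}, C \subset V' -> (forall v, v \in V' -> ~~ par C v) ->
    (forall x, x \in C -> col x) -> C \in black_channels V' adj col.
  move=> C sub H1 H2; rewrite inE; apply/andP; split; last by apply/forallP=> x; apply/implyP; exact: H2.
  by apply/andP; split; [exact: sub | apply/forallP=> v; apply/implyP; exact: H1].
have bnV : forall j, b j \notin V'.
  by move=> j; rewrite /V' in_setC in_setU imset_f.
have wnV : forall j, w j \notin V'.
  by move=> j; rewrite /V' in_setC in_setU orbC imset_f.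
have notV : forall x, x \notin V' -> (exists j, x = b j) \/ (exists j, x = w j).
  move=> x; rewrite /V' in_setC in_setU negbK => /orP[/imsetP[j _ ->]|/imsetP[j _ ->]].
    by left; exists j.
  by right; exists j.
have VnW : forall (S : {set 'I_n}) v, v \in V' -> (v \in [set w i | i in S]) = false.
  move=> S v vV; apply/negbTE/negP=> /imsetP[i _ e]; by move: vV; rewrite e (negbTE (wnV i)).
pose phi (C : {set T}) := sd C (D [set i | b i \in C]).
pose psi (C : {set T}) := sd C (D [set i | par C (w i)]).
have Hphi : forall C, C \in black_channels [set: T] adj col ->
    phi C \in black_channels V' adj col /\ psi (phi C) = C.
  move=> C /CBT_E [chC blC].
  have blC' : forall x, x \in phi C -> col x.
    move=> x; rewrite memsd; case: (boolP (x \in C)) => [/blC //|_ /=]; exact: Dblack.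
  have chC' : forall v, v \in V' -> ~~ par (phi C) v.
    by move=> v vV; rewrite parsd (negbTE (chC v)) parD VnW.
  split.
    apply: CBV_I => //; apply/subsetP=> x xC; apply/negPn/negP => /notV[[j e]|[j e]].
      by move: xC; rewrite e memsd Db inE addbb.
    by move: (blC' x xC); rewrite e (negbTE (w_white j)).
  rewrite /psi; have -> : [set i | par (phi C) (w i)] = [set i | b i \in C].
    apply/setP=> i; rewrite [LHS]inE parsd (negbTE (chC _)) parD mem_imset //.
  exact: sdK.
have Hpsi : forall C, C \in black_channels V' adj col ->
    psi C \in black_channels [set: T] adj col /\ phi (psi C) = C.
  move=> C /CBV_E [sub chC blC].
  split.
    apply: CBT_I => [v|x]; last first.
      rewrite memsd; case: (boolP (x \in C)) => [/blC //|_ /=]; exact: Dblack.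
    rewrite parsd parD; case: (boolP (v \in V')) => vV.
      by rewrite (negbTE (chC v vV)) VnW.
    case: (notV v vV) => [[j ->]|[j ->]].
      rewrite (parBlk _ _ (b_black j) blC) /=; apply/negP=> /imsetP[i _ e].
      by move: (b_black j); rewrite e (negbTE (w_white i)).
    by rewrite mem_imset // inE addbb.
  rewrite {1}/phi; have -> : [set i | b i \in psi C] = [set i | par C (w i)].
    apply/setP=> i; rewrite [LHS]inE memsd Db.
    have -> : (b i \in C) = false.
      by apply/negbTE/negP=> /(subsetP sub); rewrite (negbTE (bnV i)).
    by [].
  exact: sdK.
apply/eqP; rewrite eqn_leq; apply/andP; split.
  have inj : {in black_channels [set: T] adj col &, injective phi}.
    move=> C1 C2 H1 H2 e.
    by rewrite -(proj2 (Hphi _ H1)) -(proj2 (Hphi _ H2)) e.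
  rewrite -(card_in_imset inj); apply: subset_leq_card; apply/subsetP => _ /imsetP[C HC ->].
  exact: (proj1 (Hphi _ HC)).
have inj : {in black_channels V' adj col &, injective psi}.
  move=> C1 C2 H1 H2 e.
  by rewrite -(proj2 (Hpsi _ H1)) -(proj2 (Hpsi _ H2)) e.
rewrite -(card_in_imset inj); apply: subset_leq_card; apply/subsetP => _ /imsetP[C HC ->].
exact: (proj1 (Hpsi _ HC)).
Qed.
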